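(* Let $G$ be a $2$-edge-connected graph, $C\in\mathrm{CP}(G)$, and $G'$ a connected component of $G-C$ that contains at least one edge. If $C'\in\mathrm{CP}(G')$ is not a coparallel class of $G$, then $C'=C_1\,\dot\cup\, C_2$ for two coparallel classes $C_1,C_2\in\mathrm{CP}(G)$.
   Context: All graphs are finite, simple and undirected. For $\emptyset\subsetneq S\subsetneq V(G)$, $\delta(S)$ is the set of edges with exactly one endpoint in $S$ (a cut). An edge $e$ is a bridge if $\{e\}=\delta(S)$ for some $S$. A graph is $2$-edge-connected if it is connected and has no bridges. Two distinct edges $e,f$ are coparallel if $\{e,f\}$ is an inclusion-wise minimal cut. A coparallel class is an inclusion-wise maximal set of non-bridge edges any two distinct elements of which are coparallel (a non-bridge edge in no $2$-cut forms a singleton class). $\mathrm{CP}(G)$ is the set of coparallel classes of $G$. $G-C$ denotes $G$ with the edges of $C$ deleted. *)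

(* Defs.v *)
From mathcomp Require Import all_boot.
Set Implicit Arguments. Unset Strict Implicit. Unset Printing Implicit Defensive.

Section Graphs.
Variable V : finType.

Definition is_graph (W : {set V}) (E : {set {set V}}) : Prop :=
  forall e, e \in E -> #|e| = 2 /\ e \subset W.

Definition adj (E : {set {set V}}) : rel V := fun x y => [set x; y] \in E.

Definition delta (E : {set {set V}}) (S : {set V}) : {set {set V}} :=
  [set e in E | #|e :&: S| == 1].

Definition is_cut (W : {set V}) (E : {set {set V}}) (F : {set {set V}}) : Prop :=
  exists S : {set V}, [/\ S \subset W, S != set0, S != W & F = delta E S].

Definition bridge (W : {set V}) (E : {set {set V}}) (e : {set V}) : Prop := e \in E /\ is_cut W E [set e].

Definition connected_graph (W : {set V}) (E : {set {set V}}) : Prop :=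
  W != set0 /\ forall x y, x \in W -> y \in W -> connect (adj E) x y.

Definition two_edge_connected (W : {set V}) (E : {set {set V}}) : Prop :=
  connected_graph W E /\ forall e, ~ bridge W E e.

Definition min_cut (W : {set V}) (E : {set {set V}}) (F : {set {set V}}) : Prop :=
  is_cut W E F /\ forall F', is_cut W E F' -> F' \proper F -> False.

Definition coparallel (W : {set V}) (E : {set {set V}}) (e f : {set V}) : Prop :=
  e != f /\ min_cut W E [set e; f].

Definition coparallel_set (W : {set V}) (E : {set {set V}}) (D : {set {set V}}) : Prop :=
  D \subset E /\ (forall e, e \in D -> ~ bridge W E e) /\
  (forall e f, e \in D -> f \in D -> e != f -> coparallel W E e f).

Definition cp_class (W : {set V}) (E : {set {set V}}) (D : {set {set V}}) : Prop :=
  [/\ D != set0, coparallel_set W E D &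
      forall D', coparallel_set W E D' -> D \subset D' -> D' = D].

Definition component_of (E : {set {set V}}) (x : V) : {set V} :=
  [set y | connect (adj E) x y].

Definition edges_in (E : {set {set V}}) (W : {set V}) : {set {set V}} :=
  [set e in E | e \subset W].
End Graphs.

(* Main.v *)
Require Import Defs.
From mathcomp Require Import all_boot.
Set Implicit Arguments. Unset Strict Implicit. Unset Printing Implicit Defensive.

Section Aux.
Variable V : finType.
Implicit Types (E C F : {set {set V}}) (S T W : {set V}).

Definition sd (T : finType) (A B : {set T}) := (A :\: B) :|: (B :\: A).

Lemma in_sd (T : finType) (A B : {set T}) z : (z \in sd A B) = ((z \in A) != (z \in B)).
Proof. rewrite /sd !inE; by case: (z \in A); case: (z \in B). Qed.

Lemma card_pair_inter (a b : V) S : a != b ->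
  (#|[set a; b] :&: S| == 1) = ((a \in S) != (b \in S)).
Proof.
move=> ab.
have H : forall z, (z \in [set a; b] :&: S) = ((z == a) && (a \in S)) || ((z == b) && (b \in S)).
  move=> z; rewrite !inE; case: (eqVneq z a) => [->|za] /=.
    by rewrite (negbTE ab) orbF.
  by case: (eqVneq z b) => [->|zb] //=; rewrite andbF.
case aS: (a \in S); case bS: (b \in S).
- have -> : [set a; b] :&: S = [set a; b].
    by apply/setP=> z; rewrite H aS bS !inE ?andbT ?andbF ?orbF.
  by rewrite cards2 ab.
- have -> : [set a; b] :&: S = [set a].
    by apply/setP=> z; rewrite H aS bS !inE ?andbT ?andbF ?orbF.
  by rewrite cards1.
- have -> : [set a; b] :&: S = [set b].
    by apply/setP=> z; rewrite H aS bS !inE ?andbT ?andbF ?orbF.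
  by rewrite cards1.
- have -> : [set a; b] :&: S = set0.
    by apply/setP=> z; rewrite H aS bS !inE ?andbF ?orbF.
  by rewrite cards0.
Qed.

Definition graph2 E := forall e, e \in E -> #|e| = 2.

Lemma delta_sd E S T : graph2 E -> delta E (sd S T) = sd (delta E S) (delta E T).
Proof.
move=> g2; apply/setP=> e; rewrite in_sd !inE.
case eE: (e \in E) => //=.
have /eqP/cards2P [a [b [ab ->]]] := g2 _ eE.
rewrite !card_pair_inter // !in_sd.
by case: (a \in S); case: (b \in S); case: (a \in T); case: (b \in T).
Qed.

Lemma delta0 E : delta E set0 = set0.
Proof. by apply/setP=> e; rewrite !inE setI0 cards0 andbF. Qed.

Lemma deltaW W E : is_graph W E -> delta E W = set0.
Proof.
move=> g; apply/setP=> e; rewrite !inE.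
case eE: (e \in E) => //=.
have [c2 sW] := g _ eE.
by rewrite (setIidPl sW) c2.
Qed.

Lemma delta_sub E S : delta E S \subset E.
Proof. by apply/subsetP=> e; rewrite inE => /andP[]. Qed.

Lemma delta_edge E S (u v : V) : [set u; v] \in E -> u \in S -> v \notin S -> [set u; v] \in delta E S.
Proof.
move=> uvE uS vS.
have uv : u != v by apply/eqP=> euv; move: vS; rewrite -euv uS.
by rewrite inE uvE card_pair_inter // uS (negbTE vS).
Qed.

Lemma sd_pair3 (T : finType) (e f g : T) : e != f -> f != g -> e != g ->
  sd [set e; f] [set f; g] = [set e; g].
Proof.
move=> ef fg eg; apply/setP=> z; rewrite in_sd !inE.
case: (eqVneq z e) => [->|ze]; first by rewrite (negbTE ef) (negbTE eg).
case: (eqVneq z f) => [->|zf] //=; first by rewrite (negbTE fg).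
by case: (z == g).
Qed.

Lemma sd_set0r (T : finType) (A : {set T}) : sd A set0 = A.
Proof. by apply/setP=> z; rewrite in_sd inE; case: (z \in A). Qed.

Lemma sd_id (T : finType) (A : {set T}) : sd A A = set0.
Proof. by apply/setP=> z; rewrite in_sd inE; case: (z \in A). Qed.

Lemma sd_diff (T : finType) (A B C : {set T}) : (sd A B) :\: C = sd (A :\: C) (B :\: C).
Proof. by apply/setP=> z; rewrite !(in_sd, inE); case: (z \in C). Qed.

Lemma sd_int (T : finType) (A B C : {set T}) : (sd A B) :&: C = sd (A :&: C) (B :&: C).
Proof. by apply/setP=> z; rewrite !(in_sd, inE); case: (z \in C); case: (z \in A); case: (z\in B). Qed.

Lemma sd_sub (T : finType) (A B W : {set T}) : A \subset W -> B \subset W -> sd A B \subset W.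
Proof. by move=> sA sB; rewrite /sd subUset !(subset_trans (subsetDl _ _)). Qed.

Lemma split_DI (T : finType) (A C : {set T}) : A = (A :\: C) :|: (A :&: C).
Proof. by apply/setP=> z; rewrite !inE; case: (z \in A); case: (z \in C). Qed.

End Aux.

Set Implicit Arguments. Unset Strict Implicit. Unset Printing Implicit Defensive.

Section Cop.
Variable V : finType.
Implicit Types (E C D F : {set {set V}}) (S T W : {set V}) (e f g : {set V}).

Definition cop W E e f : bool :=
  (e != f) && [exists T : {set V}, (T \subset W) && (delta E T == [set e; f])].

Definition good W E := is_graph W E /\
  forall T, T \subset W -> #|delta E T| <= 1 -> T = set0 \/ T = W.

Lemma copP W E e f : reflect (e != f /\ exists2 T : {set V}, T \subset W & delta E T = [set e; f]) (cop W E e f).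
Proof.
apply: (iffP andP) => [[ef /existsP[T /andP[sT /eqP dT]]]|[ef [T sT dT]]].
  by split=> //; exists T.
by split=> //; apply/existsP; exists T; rewrite sT dT eqxx.
Qed.

Lemma graph2_of W E : is_graph W E -> graph2 E.
Proof. by move=> g e eE; case: (g e eE). Qed.

Lemma good_cut W E T : good W E -> T \subset W -> T != set0 -> T != W -> 1 < #|delta E T|.
Proof.
move=> [_ gd] sT T0 TW; rewrite ltnNge; apply/negP=> le1.
by case: (gd T sT le1) => eq; [move: T0 | move: TW]; rewrite eq eqxx.
Qed.

Lemma good_nobridge W E e : good W E -> ~ bridge W E e.
Proof.
move=> gG [eE [T [sT T0 TW dT]]].
by have := good_cut gG sT T0 TW; rewrite -dT cards1.
Qed.

Lemma coparallel_cop W E e f : coparallel W E e f -> cop W E e f.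
Proof.
move=> [ef [[T [sT _ _ dT]] _]]; apply/copP; split=> //; by exists T.
Qed.

Lemma cop_coparallel W E e f : good W E -> cop W E e f -> coparallel W E e f.
Proof.
move=> gG /copP [ef [T sT dT]]; split=> //; split.
  exists T; split.
  - by [].
  - apply/eqP=> T0; move: dT; rewrite T0 delta0 => /setP /(_ e); by rewrite !inE eqxx.
  - apply/eqP=> TW; move: dT; rewrite TW (deltaW gG.1) => /setP /(_ e); by rewrite !inE eqxx.
  - by rewrite dT.
move=> F' [S [sS S0 SW dS]] pF.
have := good_cut gG sS S0 SW; rewrite -dS => lt1.
have := proper_card pF; rewrite cards2 ef /=.
by rewrite ltnS leqNgt lt1.
Qed.

Lemma cop_sym W E e f : cop W E e f = cop W E f e.
Proof. by rewrite /cop eq_sym setUC. Qed.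

Lemma cop_trans W E e f g : is_graph W E -> cop W E e f -> cop W E f g -> e != g -> cop W E e g.
Proof.
move=> gG /copP[ef [S sS dS]] /copP[fg [T sT dT]] eg.
apply/copP; split=> //; exists (sd S T); first exact: sd_sub.
by rewrite (delta_sd _ _ (graph2_of gG)) dS dT sd_pair3.
Qed.

Lemma cop_E W E e f : cop W E e f -> (e \in E) /\ (f \in E).
Proof.
move=> /copP[_ [T _ dT]].
have s := delta_sub E T; rewrite dT in s.
by split; apply: (subsetP s); rewrite !inE eqxx ?orbT.
Qed.

Definition cls W E e := [set f in E | (f == e) || cop W E e f].

Lemma cp_max W E D d f : good W E -> cp_class W E D -> d \in D -> cop W E d f -> f \in D.
Proof.
move=> gG [D0 [sD [nbD cD]] mD] dD cdf.
have fE := (cop_E cdf).2.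
suff <- : f |: D = D by rewrite setU11.
apply: mD; last exact: subsetUr.
split; first by rewrite subUset sub1set fE.
split; first by move=> h _; exact: good_nobridge.
have cD' : forall h, h \in D -> h != f -> cop W E h f.
  move=> h hD hf; case: (eqVneq h d) => [->|hd] //.
  apply: cop_trans (gG.1) _ cdf hf; exact: coparallel_cop (cD _ _ hD dD hd).
move=> h k; rewrite !inE => /orP[/eqP->|hD] /orP[/eqP->|kD] hk.
- by rewrite eqxx in hk.
- by apply: cop_coparallel => //; rewrite cop_sym; apply: cD' => //; rewrite eq_sym.
- by apply: cop_coparallel => //; apply: cD'.
- by apply: cD.
Qed.

Lemma cls_eq W E D d : good W E -> cp_class W E D -> d \in D -> D = cls W E d.
Proof.
move=> gG cpD dD; have [D0 [sD [nbD cD]] mD] := cpD.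
apply/eqP; rewrite eqEsubset; apply/andP; split; apply/subsetP=> f.
  move=> fD; rewrite inE (subsetP sD _ fD) /=.
  case: (eqVneq f d) => [//|fd] /=.
  by apply: coparallel_cop; apply: cD => //; rewrite eq_sym.
rewrite inE => /andP[fE /orP[/eqP->//|]].
exact: cp_max.
Qed.

Lemma cls_cp W E e : good W E -> e \in E -> cp_class W E (cls W E e).
Proof.
move=> gG eE.
have ecls : e \in cls W E e by rewrite inE eE eqxx.
have cs : coparallel_set W E (cls W E e).
  split; first by apply/subsetP=> f; rewrite inE => /andP[].
  split; first by move=> h _; exact: good_nobridge.
  move=> h k; rewrite !inE => /andP[hE /orP[/eqP->|ceh]] /andP[kE /orP[/eqP->|cek]] hk.
  - by rewrite eqxx in hk.
  - exact: cop_coparallel.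
  - by apply: cop_coparallel => //; rewrite cop_sym.
  - apply: cop_coparallel => //; apply: (cop_trans gG.1 _ cek hk); by rewrite cop_sym.
split=> //; first by apply/set0Pn; exists e.
move=> D' [sD' [_ cD']] sub; apply/eqP; rewrite eqEsubset; apply/andP; split=> //.
apply/subsetP=> f fD'; rewrite inE (subsetP sD' _ fD') /=.
case: (eqVneq f e) => [//|fe] /=.
apply: coparallel_cop; apply: cD' => //; first exact: (subsetP sub).
by rewrite eq_sym.
Qed.

End Cop.

Set Implicit Arguments. Unset Strict Implicit. Unset Printing Implicit Defensive.

Section Red.
Variable V : finType.
Implicit Types (E C D F : {set {set V}}) (S T W : {set V}) (e f g : {set V}).

Lemma sd_sub_diff (T : finType) (A B : {set T}) : B \subset A -> sd A B = A :\: B.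
Proof.
move=> sBA; apply/setP=> z; rewrite in_sd !inE.
by case zB: (z \in B); rewrite ?(subsetP sBA _ zB) //; case: (z \in A).
Qed.

Lemma reduce W E C T : is_graph W E ->
  (forall c c', c \in C -> c' \in C -> c != c' -> cop W E c c') -> T \subset W ->
  exists2 T' : {set V}, T' \subset W & (delta E T' :\: C = delta E T :\: C) /\ #|delta E T' :&: C| <= 1.
Proof.
move=> gG cC.
suff H : forall n T, #|delta E T :&: C| <= n -> T \subset W ->
  exists2 T' : {set V}, T' \subset W & (delta E T' :\: C = delta E T :\: C) /\ #|delta E T' :&: C| <= 1.
  by apply: H (leqnn _).
elim=> [|n IH] T0 le sT0.
  by exists T0 => //; split => //; apply: leq_trans le _.
case: (leqP #|delta E T0 :&: C| 1) => [le1|gt1]; first by exists T0 => //; split.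
have [c [c' [cin c'in cc']]] := card_gt1P gt1.
move: (cin) (c'in); rewrite !inE => /andP[cd cC0] /andP[c'd c'C0].
have /copP [_ [S sS dS]] := cC _ _ cC0 c'C0 cc'.
have [||T' sT' [e1 e2]] := IH (sd T0 S).
  rewrite (delta_sd _ _ (graph2_of gG)) dS sd_int.
  have sub : [set c; c'] :&: C \subset delta E T0 :&: C.
    by apply/subsetP=> z; rewrite !inE => /andP[/orP[]/eqP-> _]; rewrite ?cd ?c'd.
  rewrite sd_sub_diff //.
  have : (delta E T0 :&: C) :\: ([set c; c'] :&: C) \proper delta E T0 :&: C.
    apply/properP; split; first exact: subsetDl.
    by exists c; rewrite // !inE eqxx cC0.
  move=> /proper_card lt; rewrite -ltnS; exact: (leq_trans lt le).
  exact: sd_sub.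
exists T' => //; split=> //; rewrite e1.
rewrite (delta_sd _ _ (graph2_of gG)) dS sd_diff.
have -> : [set c; c'] :\: C = set0.
  by apply/setP=> z; rewrite !inE; case: (eqVneq z c) => [->|]; rewrite ?cC0 //= => _; case: (eqVneq z c') => [->|]; rewrite ?c'C0 ?andbF.
by rewrite sd_set0r.
Qed.

Lemma cp_pairwise W E C : cp_class W E C ->
  forall c c', c \in C -> c' \in C -> c != c' -> cop W E c c'.
Proof. move=> [_ [_ [_ cC]] _] c c' ? ? ?; apply: coparallel_cop; exact: cC. Qed.

Lemma reduce2 W E C T : good W E -> cp_class W E C -> T \subset W ->
  exists2 T' : {set V}, T' \subset W & (delta E T' = delta E T :\: C \/
     exists2 c, c \in C & delta E T' = c |: (delta E T :\: C)).
Proof.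
move=> gG cpC sT.
have [T' sT' [e1 le]] := reduce gG.1 (cp_pairwise cpC) sT.
exists T' => //.
rewrite (split_DI (delta E T') C) e1.
move: le; rewrite leq_eqVlt ltnS leqn0 => /orP[/cards1P[c ec]|].
  right; exists c; last by rewrite ec setUC.
  have : c \in delta E T' :&: C by rewrite ec set11.
  by rewrite inE => /andP[].
by rewrite cards_eq0 => /eqP->; rewrite setU0; left.
Qed.

End Red.

Set Implicit Arguments. Unset Strict Implicit. Unset Printing Implicit Defensive.

Section Comp.
Variable V : finType.
Implicit Types (E C D F : {set {set V}}) (S T W : {set V}) (e f g b : {set V}).

Lemma no_single W E C T b : good W E -> cp_class W E C -> T \subset W ->
  delta E T :\: C = [set b] -> False.
Proof.
move=> gG cpC sT dT.
have bC : b \notin C.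
  have : b \in delta E T :\: C by rewrite dT set11.
  by rewrite inE => /andP[].
have [T' sT' [d1|[c cC d2]]] := reduce2 gG cpC sT.
  rewrite dT in d1.
  have [] := gG.2 T' sT' _ => [|T'eq|T'eq]; first by rewrite d1 cards1.
    by move: d1; rewrite T'eq delta0 => /setP/(_ b); rewrite !inE eqxx.
  by move: d1; rewrite T'eq (deltaW gG.1) => /setP/(_ b); rewrite !inE eqxx.
rewrite dT in d2.
have cb : c != b by apply/eqP=> cb; rewrite -cb cC in bC.
have : cop W E c b by apply/copP; split=> //; exists T'.
by move=> /(cp_max gG cpC cC); rewrite (negbTE bC).
Qed.

Lemma pair_reduce W E C T e f : good W E -> cp_class W E C -> T \subset W ->
  delta E T :\: C = [set e; f] -> e != f -> ~~ cop W E e f ->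
  exists2 T' : {set V}, T' \subset W & exists2 c, c \in C & delta E T' = c |: [set e; f].
Proof.
move=> gG cpC sT dT ef ncop.
have [T' sT' [d1|[c cC d2]]] := reduce2 gG cpC sT.
  rewrite dT in d1.
  by move: ncop; have -> // : cop W E e f; apply/copP; split=> //; exists T'.
by exists T' => //; exists c => //; rewrite d2 dT.
Qed.

Variable E C : {set {set V}}.
Variable x : V.
Let W' := component_of (E :\: C) x.
Let E' := edges_in (E :\: C) W'.

Lemma comp_closed u v : [set u; v] \in E :\: C -> u \in W' -> v \in W'.
Proof.
move=> uv; rewrite /W' /component_of !inE => xu.
apply: connect_trans xu (connect1 _); exact: uv.
Qed.

Lemma edge_in_comp g : is_graph [set: V] E -> g \in E :\: C -> g :&: W' != set0 -> g \subset W'.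
Proof.
move=> gG gEC /set0Pn[a]; rewrite inE => /andP[ag aW].
have gE : g \in E by move: gEC; rewrite inE => /andP[].
have /eqP/cards2P[u [v [uv ge]]] := (gG g gE).1.
rewrite ge in gEC *.
move: ag; rewrite ge !inE => /orP[]/eqP eq; subst a; rewrite subUset !sub1set.
  by rewrite aW (comp_closed gEC aW).
by rewrite setUC in gEC; rewrite (comp_closed gEC aW) aW.
Qed.

Lemma delta_restr T : is_graph [set: V] E -> T \subset W' -> delta E T :\: C = delta E' T.
Proof.
move=> gG sT; apply/setP=> g; rewrite /E' /edges_in !inE.
case gC: (g \in C) => //=; case gE: (g \in E) => //=.
case c1: (#|g :&: T| == 1); rewrite ?andbF //= andbT.
symmetry; apply: edge_in_comp gG _ _; first by rewrite inE gC gE.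
have : g :&: T != set0 by rewrite -cards_eq0 (eqP c1).
case/set0Pn=> a; rewrite inE => /andP[ag aT]; apply/set0Pn; exists a.
by rewrite inE ag (subsetP sT _ aT).
Qed.

Lemma delta_restr2 S : delta E' (S :&: W') = delta E S :&: E'.
Proof.
apply/setP=> g; rewrite /E' /edges_in !inE.
case gC: (g \in C) => //=; case gE: (g \in E) => //=; case gW: (g \subset W') => /=; rewrite ?andbF //.
by rewrite (setIC S W') setIA (setIidPl gW) andbT.
Qed.

Lemma graph_comp : is_graph [set: V] E -> is_graph W' E'.
Proof.
move=> gG g; rewrite /E' /edges_in !inE => /andP[/andP[_ gE] gW].
by split=> //; case: (gG g gE).
Qed.

Lemma good_comp : good [set: V] E -> cp_class [set: V] E C -> good W' E'.
Proof.
move=> gG cpC; split; first exact: graph_comp gG.1.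
move=> T sT; rewrite leq_eqVlt ltnS leqn0 => /orP[/cards1P[b db]|].
  by case: (no_single gG cpC (subsetT T) (etrans (delta_restr gG.1 sT) db)).
rewrite cards_eq0 => /eqP d0.
case: (eqVneq T set0) => [->|/set0Pn[y yT]]; first by left.
right; apply/eqP; rewrite eqEsubset sT /=.
have key : forall u v, [set u; v] \in E :\: C -> u \in T -> v \in T.
  move=> u v uv uT; apply/negPn/negP=> vT.
  have uW := subsetP sT _ uT; have vW := comp_closed uv uW.
  have : [set u; v] \in E' by rewrite /E' /edges_in inE uv subUset !sub1set uW vW.
  by move=> /delta_edge /(_ uT vT); rewrite d0 inE.
have cl : closed (adj (E :\: C)) T.
  move=> u v uv; apply/idP/idP; first exact: key.
  by apply: key; rewrite /adj setUC in uv.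
have xT : x \in T.
  have yW := subsetP sT _ yT; move: yW; rewrite /W' /component_of inE => cxy.
  by rewrite (closed_connect cl cxy).
apply/subsetP=> z; rewrite /W' /component_of inE => cxz.
by rewrite -(closed_connect cl cxz).
Qed.

End Comp.

Set Implicit Arguments. Unset Strict Implicit. Unset Printing Implicit Defensive.

Lemma sd_calc (T : finType) (e f g c1 c2 : T) :
  e != f -> f != g -> e != g -> c1 != e -> c1 != f -> c1 != g ->
  c2 != e -> c2 != f -> c2 != g ->
  sd (sd (c1 |: [set e; f]) (c2 |: [set f; g])) (sd [set c1] [set c2]) = [set e; g].
Proof.
move=> ef fg eg c1e c1f c1g c2e c2f c2g.
have ef1 : (e == f) = false by exact: negbTE ef.
have ef2 : (f == e) = false by rewrite eq_sym; exact: negbTE ef.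
have fg1 : (f == g) = false by exact: negbTE fg.
have fg2 : (g == f) = false by rewrite eq_sym; exact: negbTE fg.
have eg1 : (e == g) = false by exact: negbTE eg.
have eg2 : (g == e) = false by rewrite eq_sym; exact: negbTE eg.
have c1e1 : (c1 == e) = false by exact: negbTE c1e.
have c1e2 : (e == c1) = false by rewrite eq_sym; exact: negbTE c1e.
have c1f1 : (c1 == f) = false by exact: negbTE c1f.
have c1f2 : (f == c1) = false by rewrite eq_sym; exact: negbTE c1f.
have c1g1 : (c1 == g) = false by exact: negbTE c1g.
have c1g2 : (g == c1) = false by rewrite eq_sym; exact: negbTE c1g.
have c2e1 : (c2 == e) = false by exact: negbTE c2e.
have c2e2 : (e == c2) = false by rewrite eq_sym; exact: negbTE c2e.
have c2f1 : (c2 == f) = false by exact: negbTE c2f.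
have c2f2 : (f == c2) = false by rewrite eq_sym; exact: negbTE c2f.
have c2g1 : (c2 == g) = false by exact: negbTE c2g.
have c2g2 : (g == c2) = false by rewrite eq_sym; exact: negbTE c2g.
apply/setP=> z; rewrite !(in_sd, inE).
have [->|ze] := eqVneq z e; first by rewrite ?ef1 ?ef2 ?fg1 ?fg2 ?eg1 ?eg2 ?c1e1 ?c1e2 ?c1f1 ?c1f2 ?c1g1 ?c1g2 ?c2e1 ?c2e2 ?c2f1 ?c2f2 ?c2g1 ?c2g2 ?eqxx.
have [->|zf] := eqVneq z f; first by rewrite ?ef1 ?ef2 ?fg1 ?fg2 ?eg1 ?eg2 ?c1e1 ?c1e2 ?c1f1 ?c1f2 ?c1g1 ?c1g2 ?c2e1 ?c2e2 ?c2f1 ?c2f2 ?c2g1 ?c2g2 ?eqxx.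
have [->|zg] := eqVneq z g; first by rewrite ?ef1 ?ef2 ?fg1 ?fg2 ?eg1 ?eg2 ?c1e1 ?c1e2 ?c1f1 ?c1f2 ?c1g1 ?c1g2 ?c2e1 ?c2e2 ?c2f1 ?c2f2 ?c2g1 ?c2g2 ?eqxx.
by rewrite /=; case: (z == c1); case: (z == c2).
Qed.

Lemma good_G (V : finType) (E : {set {set V}}) :
  is_graph [set: V] E -> two_edge_connected [set: V] E -> good [set: V] E.
Proof.
move=> gG [[_ conn] nbr]; split=> // T _ le1.
case: (eqVneq T set0) => [->|/set0Pn[y yT]]; first by left.
case: (eqVneq T setT) => [->|TT]; first by right.
exfalso; move: le1; rewrite leq_eqVlt ltnS leqn0 => /orP[/cards1P[b db]|].
  apply: (nbr b); split.
    by apply: (subsetP (delta_sub E T)); rewrite db set11.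
  exists T; split; [exact: subsetT | by apply/set0Pn; exists y | by [] | by rewrite db].
rewrite cards_eq0 => /eqP d0.
have key : forall u v, adj E u v -> u \in T -> v \in T.
  move=> u v uv uT; apply/negPn/negP=> vT.
  by have := delta_edge uv uT vT; rewrite d0 inE.
have cl : closed (adj E) T.
  move=> u v uv; apply/idP/idP; first exact: key.
  by apply: key; rewrite /adj setUC.
have : ~~ ([set: V] \subset T) by rewrite subTset.
case/subsetPn=> z _ zT.
have := closed_connect cl (conn y z (in_setT _) (in_setT _)).
by rewrite yT (negbTE zT).
Qed.

Unset Implicit Arguments.

Theorem mainTheorem4 (V : finType) (E C C' : {set {set V}}) (x : V) :
  is_graph [set: V] E ->
  two_edge_connected [set: V] E ->
  cp_class [set: V] E C ->
  edges_in (E :\: C) (component_of (E :\: C) x) != set0 ->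
  cp_class (component_of (E :\: C) x) (edges_in (E :\: C) (component_of (E :\: C) x)) C' ->
  ~ cp_class [set: V] E C' ->
  exists C1 C2 : {set {set V}},
    [/\ cp_class [set: V] E C1, cp_class [set: V] E C2,
        [disjoint C1 & C2] & C' = C1 :|: C2].
Proof.
move=> gG tec cpC _ cpC' ncp.
have GG := good_G gG tec.
have GG' := good_comp x GG cpC.
set W' := component_of (E :\: C) x in GG' cpC' *.
set E' := edges_in (E :\: C) W' in GG' cpC' *.
have sE'E : forall d, d \in E' -> (d \in E) && (d \notin C).
  by move=> d; rewrite /E' /edges_in !inE => /andP[/andP[-> ->]].
have C'E' : forall d, d \in C' -> d \in E'.
  by move=> d dC; case: cpC' => _ [/subsetP s _] _; exact: s.
have C'E : forall d, d \in C' -> d \in E.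
  by move=> d /C'E' /sE'E /andP[].
have C'nC : forall d, d \in C' -> d \notin C.
  by move=> d /C'E' /sE'E /andP[].
have clA : forall d, d \in C' -> cls [set: V] E d \subset C'.
  move=> d dC; apply/subsetP=> f; rewrite inE => /andP[fE /orP[/eqP->//|]].
  move=> /copP[df [S _ dS]].
  have dE' := C'E' _ dC.
  have r := delta_restr2 E C x S; rewrite -/W' -/E' dS in r.
  case fE': (f \in E').
    apply: (cp_max GG' cpC' dC); apply/copP; split=> //; exists (S :&: W'); first exact: subsetIr.
    rewrite r; apply/setP=> z; rewrite in_setI !in_set2.
    by apply/andb_idr => /orP[]/eqP->.
  have r1 : delta E' (S :&: W') = [set d].
    rewrite r; apply/setP=> z; rewrite in_setI in_set2 in_set1.
    have [->|zd] := eqVneq z d; first by rewrite /= dE'.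
    by have [->|zf] := eqVneq z f; rewrite /= ?fE'.
  have [||] := GG'.2 (S :&: W') (subsetIr _ _); first by rewrite r1 cards1.
    by move=> e0; move: r1; rewrite e0 delta0 => /setP/(_ d); rewrite !inE eqxx.
  by move=> e0; move: r1; rewrite e0 (deltaW GG'.1) => /setP/(_ d); rewrite !inE eqxx.
have clB : forall d1 d2, d1 \in C' -> d2 \in C' -> d1 != d2 ->
    exists2 T : {set V}, T \subset [set: V] & delta E T :\: C = [set d1; d2].
  move=> d1 d2 d1C d2C d12.
  have /copP[_ [T sT dT]] := cp_pairwise cpC' d1C d2C d12.
  exists T; first exact: subsetT.
  by rewrite (delta_restr gG sT) -/W' -/E' dT.
have notcls : forall d g, g \in E -> g \notin cls [set: V] E d -> (g != d) && ~~ cop [set: V] E d g.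
  by move=> d g gE; rewrite inE gE /= negb_or.
have clC : forall e f g, e \in C' -> f \in C' -> g \in C' ->
    e != f -> f != g -> e != g ->
    ~~ cop [set: V] E e f -> ~~ cop [set: V] E f g -> ~~ cop [set: V] E e g -> False.
  move=> e f g eC fC gC ef fg eg nef nfg neg.
  have [T1 _ dT1] := clB _ _ eC fC ef.
  have [T2 _ dT2] := clB _ _ fC gC fg.
  have [U1 _ [c1 c1C dU1]] := pair_reduce GG cpC (subsetT _) dT1 ef nef.
  have [U2 _ [c2 c2C dU2]] := pair_reduce GG cpC (subsetT _) dT2 fg nfg.
  have neqC : forall h c, h \in C' -> c \in C -> c != h.
    by move=> h c hC cC; apply/eqP=> ch; move: (C'nC _ hC); rewrite -ch cC.
  have [S dS] : exists S, delta E S = sd [set c1] [set c2].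
    case: (eqVneq c1 c2) => [<-|c12]; first by exists set0; rewrite delta0 sd_id.
    have /copP[_ [S _ dS]] := cp_pairwise cpC c1C c2C c12.
    exists S; rewrite dS; apply/setP=> z; rewrite in_sd !inE.
    case: (eqVneq z c1) => [->|]; first by rewrite ?eqxx (negbTE c12).
    by move=> _; case: (z == c2).
  move: neg => /negP; apply; apply/copP; split=> //.
  exists (sd (sd U1 U2) S); first exact: subsetT.
  rewrite !(delta_sd _ _ (graph2_of gG)) dU1 dU2 dS.
  by apply: sd_calc => //; apply: neqC.
have [e eC] : exists e, e \in C'.
  by case: cpC' => /set0Pn[e eC] _ _; exists e.
have eE := C'E _ eC.
have ncl : ~~ (C' \subset cls [set: V] E e).
  apply/negP=> sub; apply: ncp.
  suff -> : C' = cls [set: V] E e by exact: cls_cp.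
  by apply/eqP; rewrite eqEsubset sub clA.
have [f fC fncl] := subsetPn ncl.
have fE := C'E _ fC.
have /andP[fe nef] := notcls _ _ fE fncl.
exists (cls [set: V] E e), (cls [set: V] E f); split.
- exact: cls_cp.
- exact: cls_cp.
- rewrite -setI_eq0; apply/negPn/negP => /set0Pn [g]; rewrite inE => /andP[ge gf].
  move: ge gf; rewrite !inE => /andP[gE /orP[/eqP gee|ceg]] /andP[_ /orP[/eqP gef|cfg]].
  + by move: fe; rewrite -gee -gef eqxx.
  + by move: nef; rewrite cop_sym -gee cfg.
  + by move: nef; rewrite -gef ceg.
  + move: nef; rewrite (cop_trans gG ceg _ _) //; first by rewrite cop_sym.
    by rewrite eq_sym.
- apply/eqP; rewrite eqEsubset; apply/andP; split; last by rewrite subUset (clA _ eC) (clA _ fC).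
  apply/subsetP=> g gC; rewrite inE.
  have gE := C'E _ gC.
  case ge: (g \in cls [set: V] E e) => //=; case gf: (g \in cls [set: V] E f) => //.
  have /andP[ge' neg] := notcls _ _ gE (negbT ge).
  have /andP[gf' nfg] := notcls _ _ gE (negbT gf).
  exfalso; apply: (clC e f g) => //.
  - by rewrite eq_sym.
  - by rewrite eq_sym.
  - by rewrite eq_sym.
Qed.
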